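(* Define the score \[r=\frac{\mathrm{mark}}{\mathrm{entry}}\cdot\frac{\mathrm{notional}}{\mathrm{account\ value}}.\] 1. The score is homogeneous of degree zero in $(\mathrm{notional},\mathrm{account\ value})$: for every $\alpha>0$, $r(\alpha\,\mathrm{notional},\alpha\,\mathrm{account\ value})=r(\mathrm{notional},\mathrm{account\ value})$. 2. Therefore a proportional split of an account preserves its score. 3. If no other winner shares the parent's score, a proportional split preserves the aggregate seizure under the queue rule ranked by $r$; that is, the queue rule is Sybil resistant.
   Context: Each winning account has a mark price, an entry price, a notional, an account value $>0$, and a haircutable endowment. A proportional split of an account into children $a=1,\dots,m$ uses fractions $\alpha_a>0$ with $\sum_a\alpha_a=1$. Each child has notional, account value and endowment equal to $\alpha_a$ times the parent's, and the same mark and entry prices. The queue rule with budget $B$ works as follows: - It processes winners in decreasing order of score. - Each processed winner $j$ with endowment $w_j$ has $\min\{w_j,\text{remaining budget}\}$ seized. - The seized amount is subtracted from the remaining budget. The queue rule is Sybil resistant for a split if the total seizure from the children equals the seizure from the unsplit parent. *)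

(* Defs.v *)
From HB Require Import structures.
From mathcomp Require Import all_boot all_order all_algebra.
Set Implicit Arguments. Unset Strict Implicit. Unset Printing Implicit Defensive.
Import Order.TTheory GRing.Theory Num.Theory.
Local Open Scope ring_scope.

Section Model.
Variable R : realFieldType.

Record account := Account {
  mark : R; entry : R; notional : R; aval : R ; endow : R }.

Definition rscore (mk en n v : R) : R := mk / en * (n / v).
Definition score (a : account) : R := rscore (mark a) (entry a) (notional a) (aval a).

Definition scale (alpha : R) (a : account) : account :=
  Account (mark a) (entry a) (alpha * notional a) (alpha * aval a) (alpha * endow a).

Fixpoint queue_seize (L : eqType) (f : L -> account) (B : R) (s : seq L) : L -> R :=
  match s with
  | [::] => fun _ => 0
  | l :: s' => let x := Num.min (endow (f l)) B in
      fun l' => (if l' == l then x else 0) + queue_seize f (B - x) s' l'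
  end.

(* s is an admissible processing order of the population f : L -> account:
   every winner appears exactly once, in decreasing (weakly) order of score
   (ties broken arbitrarily). *)
Definition ranked (L : finType) (f : L -> account) (s : seq L) : bool :=
  perm_eq s (enum L) && sorted (fun x y => score (f y) <= score (f x)) s.

Definition unsplit_pop (n : nat) (p : account) (others : 'I_n -> account)
  (l : option 'I_n) : account :=
  match l with None => p | Some i => others i end.

Definition split_pop (n m : nat) (p : account) (alpha : 'I_m -> R)
  (others : 'I_n -> account) (l : 'I_m + 'I_n) : account :=
  match l with inl a => scale (alpha a) p | inr i => others i end.

End Model.

(* Main.v *)
Require Import Defs.
From HB Require Import structures.
From mathcomp Require Import all_boot all_order all_algebra.
From mathcomp Require Import lra.
Import Order.TTheory GRing.Theory Num.Theory.
Local Open Scope ring_scope.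

Section Aux.
Variable R : realFieldType.

Fixpoint remb {L : eqType} (f : L -> account R) (B : R) (s : seq L) : R :=
  match s with [::] => B | l :: s' => remb f (B - Num.min (endow (f l)) B) s' end.

Lemma q_notin (L : eqType) (f : L -> account R) B s l :
  l \notin s -> queue_seize f B s l = 0.
Proof.
elim: s B => [|a s IH] B //=; rewrite in_cons negb_or => /andP[ne nin].
by rewrite (negbTE ne) add0r IH.
Qed.

Lemma q_cat (L : eqType) (f : L -> account R) B s1 s2 l :
  queue_seize f B (s1 ++ s2) l =
  queue_seize f B s1 l + queue_seize f (remb f B s1) s2 l.
Proof. by elim: s1 B => [|a s IH] B /=; rewrite ?add0r // IH addrA. Qed.

Lemma remb_sum (L : eqType) (f : L -> account R) B s :
  (forall l, 0 <= endow (f l)) -> 0 <= B ->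
  remb f B s = Num.max (B - \sum_(l <- s) endow (f l)) 0.
Proof.
move=> hf; elim: s B => [|a s IH] B hB /=.
  by rewrite big_nil subr0 maxElt; case: ltrP => ? //; lra.
have hS : 0 <= \sum_(l <- s) endow (f l) by rewrite sumr_ge0.
have ha := hf a.
rewrite IH; last by rewrite minElt; case: ltrP => ?; lra.
rewrite big_cons [Num.min _ _]minElt; case: ltrP => ?; rewrite !maxElt;
  by repeat (case: ltrP => ?); lra.
Qed.

Lemma q_total (L : eqType) (f : L -> account R) B s :
  uniq s -> (forall l, 0 <= endow (f l)) -> 0 <= B ->
  \sum_(l <- s) queue_seize f B s l = Num.min B (\sum_(l <- s) endow (f l)).
Proof.
move=> + hf; elim: s B => [|a s IH] B /=.
  by move=> _ hB; rewrite !big_nil minElt; case: ltrP => ? //; lra.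
move=> /andP[nas us] hB.
rewrite big_cons /= eqxx (@q_notin _ _ _ _ _ nas) addr0 big_split /=.
rewrite (big1_seq _ _ (fun l => if l == a then _ else 0)); last first.
  by move=> l /= ls; case: eqP => // ela; move: nas; rewrite -ela ls.
have hS : 0 <= \sum_(l <- s) endow (f l) by rewrite sumr_ge0.
have ha := hf a.
rewrite IH //; last by rewrite minElt; case: ltrP => ?; lra.
rewrite big_cons add0r [Num.min (endow _) B]minElt; case: ltrP => ?; rewrite !minElt;
  by repeat (case: ltrP => ?); lra.
Qed.

Lemma sorted_split (T : eqType) (sc : T -> R) (P : pred T) s :
  (forall x y, P y -> sc y <= sc x -> P x) ->
  sorted (fun x y => sc y <= sc x) s -> s = filter P s ++ filter (predC P) s.
Proof.
move=> hP; elim: s => [|x s IH] //= hs.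
have hs' := path_sorted hs.
case Px: (P x) => /=; first by rewrite -IH.
have tr : transitive (fun x y : T => sc y <= sc x).
  by move=> a b c h1 h2; apply: le_trans h2 h1.
have /allP hall := order_path_min tr hs.
have hnP : all (predC P) s.
  apply/allP => y ys /=; apply/negP => Py.
  by rewrite (hP x y Py (hall y ys)) in Px.
have -> : filter P s = [::].
  by apply/eqP; rewrite -[_ == _]negbK -has_filter -all_predC.
by rewrite (all_filterP hnP).
Qed.

Lemma q_block (L : finType) (f : L -> account R) B s t l0 :
  ranked f s -> score (f l0) = t ->
  queue_seize f B s l0 =
  queue_seize f (remb f B [seq l <- s | t < score (f l)])
    [seq l <- [seq l <- s | ~~ (t < score (f l))] | t <= score (f l)] l0.
Proof.
move=> /andP[_ hs] ht.
have tr : transitive (fun x y : L => score (f y) <= score (f x)).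
  by move=> a b c h1 h2; apply: le_trans h2 h1.
rewrite {1}(@sorted_split L (fun l => score (f l)) (fun l => t < score (f l)) s) //;
  last by move=> x y /= h1 h2; apply: lt_le_trans h1 h2.
have hs2 := sorted_filter tr (predC (fun l => t < score (f l))) hs.
rewrite {1}(@sorted_split L (fun l => score (f l)) (fun l => t <= score (f l)) _ _ hs2);
  last by move=> x y /= h1 h2; apply: le_trans h1 h2.
rewrite !q_cat (@q_notin _ _ _ (filter _ s) l0); last by rewrite mem_filter ht ltxx.
rewrite (@q_notin _ _ _ (filter (predC _) _) l0); last by rewrite mem_filter /= ht lexx.
by rewrite add0r addr0.
Qed.
End Aux.
Arguments remb {R L}.
Arguments remb_sum {R L}.
Arguments q_total {R L}.

Theorem mainTheorem6 (R : realFieldType) :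
  (* 1. homogeneity of degree zero in (notional, account value) *)
  (forall (mk en n v alpha : R), 0 < alpha -> 0 < v ->
     rscore mk en (alpha * n) (alpha * v) = rscore mk en n v)
  /\
  (* 2. a proportional split preserves the score *)
  (forall (p : account R) (m : nat) (alpha : 'I_m -> R),
     0 < aval p -> (forall a, 0 < alpha a) -> \sum_(a < m) alpha a = 1 ->
     forall a, score (scale (alpha a) p) = score p)
  /\
  (* 3. Sybil resistance of the queue rule ranked by the score *)
  (forall (p : account R) (n m : nat) (others : 'I_n -> account R)
          (alpha : 'I_m -> R) (B : R)
          (s0 : seq (option 'I_n)) (s1 : seq ('I_m + 'I_n)%type),
     0 < aval p -> 0 <= endow p ->
     (forall i, 0 < aval (others i)) -> (forall i, 0 <= endow (others i)) ->
     (forall a, 0 < alpha a) -> \sum_(a < m) alpha a = 1 ->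
     0 <= B ->
     (forall i, score (others i) != score p) ->
     ranked (unsplit_pop p others) s0 ->
     ranked (split_pop p alpha others) s1 ->
     \sum_(a < m) queue_seize (split_pop p alpha others) B s1 (inl a)
       = queue_seize (unsplit_pop p others) B s0 None).
Proof.
have P1 : forall (mk en n v alpha : R), 0 < alpha ->
     rscore mk en (alpha * n) (alpha * v) = rscore mk en n v.
  move=> mk en n v al hal.
  by rewrite /rscore; congr (_ * _); rewrite invfM mulrACA divff ?mul1r // lt0r_neq0.
have P2 : forall (p : account R) (al : R), 0 < al -> score (scale al p) = score p.
  by move=> p al hal; rewrite /score /= P1.
split; first by move=> *; apply: P1.
split; first by move=> p m alpha _ hal _ a; apply: P2.
move=> p n m others alpha B s0 s1 hp hep hot heo hal hsum hB hne r0 r1.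
set f1 := split_pop p alpha others.
set f0 := unsplit_pop p others.
set sp := score p.
have sc1l a : score (f1 (inl a)) = sp by rewrite /f1 /= P2.
have sc0 : score (f0 None) = sp by [].
have nn1 : forall l, 0 <= endow (f1 l).
  by case=> [a|i] //=; rewrite mulr_ge0 // ltW.
have nn0 : forall l, 0 <= endow (f0 l) by case.
have inlI : injective (@inl 'I_m 'I_n) by move=> ? ? [].
have inrI : injective (@inr 'I_m 'I_n) by move=> ? ? [].
have SomeI : injective (@Some 'I_n) by move=> ? ? [].
have hperm1 := andP r1; case: hperm1 => hp1 _.
have hperm0 := andP r0; case: hperm0 => hp0 _.
have u1 : uniq s1 by rewrite (perm_uniq hp1) enum_uniq.
have u0 : uniq s0 by rewrite (perm_uniq hp0) enum_uniq.
rewrite (eq_bigr _ (fun a _ => @q_block R _ _ B _ _ _ r1 (sc1l a))) (@q_block R _ _ B _ _ _ r0 sc0).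
set Pi := fun i : 'I_n => sp < score (others i).
have hx1 : perm_eq [seq l <- s1 | sp < score (f1 l)]
                   (map inr (filter Pi (index_enum 'I_n))).
  apply: uniq_perm; first by rewrite filter_uniq.
    by rewrite (map_inj_uniq inrI) filter_uniq // index_enum_uniq.
  move=> l; rewrite mem_filter (perm_mem hp1) mem_enum andbT; case: l => [a|i].
    by rewrite sc1l ltxx; apply/esym/negbTE/mapP => -[j _ []].
  by rewrite (mem_map inrI) mem_filter mem_index_enum andbT.
have hx0 : perm_eq [seq l <- s0 | sp < score (f0 l)]
                   (map Some (filter Pi (index_enum 'I_n))).
  apply: uniq_perm; first by rewrite filter_uniq.
    by rewrite (map_inj_uniq SomeI) filter_uniq // index_enum_uniq.
  move=> l; rewrite mem_filter (perm_mem hp0) mem_enum andbT; case: l => [i|].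
    by rewrite (mem_map SomeI) mem_filter mem_index_enum andbT.
  by rewrite sc0 ltxx; apply/esym/negbTE/mapP => -[j _ []].
have hrem : remb f1 B [seq l <- s1 | sp < score (f1 l)] =
            remb f0 B [seq l <- s0 | sp < score (f0 l)].
  rewrite !remb_sum //; congr (Num.max (B - _) 0).
  by rewrite (perm_big _ hx1) (perm_big _ hx0) !big_map.
rewrite hrem.
set B' := remb f0 B _.
have hB' : 0 <= B' by rewrite /B' remb_sum // maxElt; case: ltrP => ?; lra.
set c1 := [seq l <- _ | sp <= score (f1 l)].
set c0 := [seq l <- _ | sp <= score (f0 l)].
have hc1 : perm_eq c1 (map inl (index_enum 'I_m)).
  apply: uniq_perm; first by rewrite !filter_uniq.
    by rewrite (map_inj_uniq inlI) index_enum_uniq.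
  move=> l; rewrite !mem_filter (perm_mem hp1) mem_enum andbT; case: l => [a|i].
    by rewrite sc1l lexx ltxx (mem_map inlI) mem_index_enum.
  rewrite /= -leNgt -eq_le eq_sym (negbTE (hne i)).
  by apply/esym/negbTE/mapP => -[j _ []].
have hc0 : perm_eq c0 [:: None].
  apply: uniq_perm; first by rewrite !filter_uniq.
    by [].
  move=> l; rewrite !mem_filter (perm_mem hp0) mem_enum andbT; case: l => [i|].
    by rewrite /= -leNgt -eq_le eq_sym (negbTE (hne i)).
  by rewrite sc0 lexx ltxx.
have E1 : \sum_(a < m) queue_seize f1 B' c1 (inl a) = \sum_(l <- c1) queue_seize f1 B' c1 l.
  by rewrite (perm_big _ hc1) big_map.
have E0 : queue_seize f0 B' c0 None = \sum_(l <- c0) queue_seize f0 B' c0 l.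
  by rewrite (perm_big _ hc0) big_seq1.
rewrite E1 E0 !q_total //; last by rewrite !filter_uniq.
  rewrite (perm_big _ hc1) (perm_big _ hc0) big_map big_seq1 /=.
  by rewrite -mulr_suml hsum mul1r.
by rewrite !filter_uniq.
Qed.
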